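(* Let $M_1,M_2$ be binary matroids with common triangle $T=E(M_1)\cap E(M_2)$, where $T$ contains no cocircuit of $M_1$ or of $M_2$, and let $M=M_1\oplus_3M_2$. Then: (i) every cocircuit $C^*$ of $M$ is either a cocircuit of $M_1$ or of $M_2$ disjoint from $T$, or is of the form $C_1^*\triangle C_2^*$ where $C_i^*$ is a cocircuit of $M_i$ ($i=1,2$) and $C_1^*\cap T=C_2^*\cap T$ has exactly two elements; (ii) every cocircuit of $M_1$ or of $M_2$ disjoint from $T$ is a cocircuit of $M$; and if $C_i^*$ is a cocircuit of $M_i$ ($i=1,2$) with $C_1^*\cap T=C_2^*\cap T$ of size exactly two, then either $C_1^*\triangle C_2^*$ is a cocircuit of $M$, or $C_1^*\triangle C_2^*$ is the disjoint union of two cocircuits $R^*,Q^*$ of $M$, each of which meets both $E(M_1)$ and $E(M_2)$.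
   Context: If $M_1,M_2$ are binary matroids on $E_1,E_2$ with $E_1\cap E_2=T$ and $T$ a triangle of both, $P_T(M_1,M_2)$ denotes the generalized parallel connection across $T$: the matroid on $E_1\cup E_2$ whose flats are exactly the sets $F$ such that $F\cap E_i$ is a flat of $M_i$ for $i=1,2$. The 3-sum is $M_1\oplus_3 M_2=P_T(M_1,M_2)\setminus T$. $\triangle$ denotes symmetric difference. *)

(* Defs.v *)
From HB Require Import structures.
From mathcomp Require Import all_boot all_order all_algebra.
Set Implicit Arguments. Unset Strict Implicit. Unset Printing Implicit Defensive.
Import GRing.Theory.

Record matroid (U : finType) := Matroid {
  ground : {set U};
  indep : {set U} -> bool;
  indep_ground : forall I, indep I -> I \subset ground;
  indep0 : indep set0;
  indep_sub : forall I J : {set U}, J \subset I -> indep I -> indep J;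
  indep_aug : forall I J : {set U}, indep I -> indep J -> #|I| < #|J| ->
                exists2 x, x \in J :\: I & indep (x |: I)
}.

Section Matroids.
Variable U : finType.
Implicit Types (M : matroid U) (X Y B C F : {set U}).

Definition symdiff X Y : {set U} := (X :\: Y) :|: (Y :\: X).

Definition basis M B : bool :=
  indep M B && [forall I : {set U}, (indep M I && (B \subset I)) ==> (I == B)].

Definition circuit M C : bool :=
  [&& C \subset ground M, ~~ indep M C &
      [forall D : {set U}, (D \proper C) ==> indep M D]].

(* independent sets of the dual matroid M^* : subsets of the ground set
   avoiding some basis of M *)
Definition coindep M X : bool :=
  (X \subset ground M) && [exists B : {set U}, basis M B && [disjoint X & B]].

Definition cocircuit M C : bool :=
  [&& C \subset ground M, ~~ coindep M C &
      [forall D : {set U}, (D \proper C) ==> coindep M D]].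

Definition rank M X : nat :=
  \max_(I : {set U} | (I \subset X) && indep M I) #|I|.

Definition flat M F : bool :=
  (F \subset ground M) &&
  [forall x in ground M :\: F, rank M F < rank M (x |: F)].

Definition triangle M T : bool := circuit M T && (#|T| == 3).

Definition binary M : Prop :=
  exists (n : nat) (f : U -> 'rV['F_2]_n),
    forall X, indep M X = (X \subset ground M) && free [seq f x | x <- enum X].

Section Delete.
Variables (M : matroid U) (X : {set U}).
Let dind (I : {set U}) := indep M I && (I \subset ground M :\: X).
Lemma del_ground (I : {set U}) : dind I -> I \subset ground M :\: X.
Proof. by move=> /andP[]. Qed.
Lemma del0 : dind set0.
Proof. by rewrite /dind indep0 sub0set. Qed.
Lemma del_sub (I J : {set U}) : J \subset I -> dind I -> dind J.
Proof.
move=> sJI /andP[iI sI]; rewrite /dind (indep_sub sJI iI) /=.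
exact: subset_trans sJI sI.
Qed.
Lemma del_aug (I J : {set U}) : dind I -> dind J -> #|I| < #|J| ->
  exists2 x, x \in J :\: I & dind (x |: I).
Proof.
move=> /andP[iI sI] /andP[iJ sJ] lt.
have [x xJI ix] := indep_aug iI iJ lt; exists x => //.
rewrite /dind ix /= subUset sI andbT sub1set.
by move: xJI; rewrite in_setD => /andP[_ /(subsetP sJ)].
Qed.
Definition delete : matroid U := Matroid del_ground del0 del_sub del_aug.
End Delete.

Definition is_gen_par_conn (M1 M2 : matroid U) (T : {set U}) (P : matroid U) : Prop :=
  ground P = ground M1 :|: ground M2 /\
  forall F, flat P F <->
    [/\ F \subset ground M1 :|: ground M2,
        flat M1 (F :&: ground M1) & flat M2 (F :&: ground M2)].

Definition three_sum (P : matroid U) (T : {set U}) : matroid U := delete P T.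

End Matroids.

(* Main.v *)
Require Import Defs.
From HB Require Import structures.
From mathcomp Require Import all_boot all_order all_algebra.
From Stdlib Require Import Classical.

Module PV.
Set Implicit Arguments. Unset Strict Implicit. Unset Printing Implicit Defensive.
Import GRing.Theory.
Local Open Scope ring_scope.

Lemma F2cases (x : 'F_2) : x = 0 \/ x = 1.
Proof. by case: x => [[|[|//]]] i; [left|right]; apply/val_inj. Qed.

Section Vec.
Variable n : nat.
Implicit Types (u v : 'rV['F_2]_n) (w : 'cV['F_2]_n) (s : seq 'rV['F_2]_n).

Definition dot u w : 'F_2 := (u *m w) 0 0.

Lemma dotDl u v w : dot (u + v) w = dot u w + dot v w.
Proof. by rewrite /dot mulmxDl mxE. Qed.
Lemma dotDr u w w' : dot u (w + w') = dot u w + dot u w'.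
Proof. by rewrite /dot mulmxDr mxE. Qed.

Lemma V2 s u w : u \in <<s>>%VS -> (forall v, v \in s -> dot v w = 0) -> dot u w = 0.
Proof.
rewrite -{1}[s]in_tupleE => /coord_span -> H.
rewrite /dot mulmx_suml summxE big1 // => i _.
rewrite -scalemxAl mxE.
have -> : ((in_tuple s)`_i *m w) 0 0 = 0.
  apply: H; rewrite /=; apply: mem_nth; by rewrite ltn_ord.
by rewrite mulr0.
Qed.

Lemma V3 s v : v \notin <<s>>%VS -> exists w, (forall u, u \in s -> dot u w = 0) /\ dot v w != 0.
Proof.
move=> vs.
pose A := \matrix_(i < size s) nth 0 s i.
have nA : ~~ (v <= A)%MS.
  apply: contra vs => /submxP [D ->].
  rewrite mulmx_sum_row; apply: memv_suml => i _; apply: memvZ.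
  apply: memv_span; rewrite rowK; apply: mem_nth; by rewrite ltn_ord.
rewrite submxE in nA.
have [j hj] : exists j, (v *m cokermx A) 0 j != 0.
  case: (pickP (fun j => (v *m cokermx A) 0 j != 0)) => [j hj|h]; first by exists j.
  exfalso; move/negP: nA; apply; apply/eqP/rowP => j.
  by move: (h j) => /negbFE/eqP ->; rewrite mxE.
exists (col j (cokermx A)); split.
  move=> u /(nthP 0) [i hi <-].
  have h0 : (A *m cokermx A) (Ordinal hi) j = 0 by rewrite mulmx_coker mxE.
  rewrite mxE in h0. rewrite /dot mxE -[RHS]h0; apply: eq_bigr => k _.
  by rewrite !mxE.
by rewrite /dot colE mulmxA -colE mxE.
Qed.
End Vec.

End PV.
Import PV.

Module PG.
Set Implicit Arguments. Unset Strict Implicit. Unset Printing Implicit Defensive.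

Section Gen.
Variable U : finType.
Implicit Types (N : matroid U) (X Y I J B F : {set U}).

Lemma rank_ge N I X : indep N I -> I \subset X -> #|I| <= rank N X.
Proof. by move=> iI sIX; apply: (@leq_bigmax_cond _ (fun I => (I \subset X) && indep N I)); rewrite sIX iI. Qed.

Lemma rank_witness N X : exists2 I, indep N I && (I \subset X) & rank N X = #|I|.
Proof.
have h : 0 < #|[pred I : {set U} | (I \subset X) && indep N I]|.
  apply/card_gt0P; exists set0; by rewrite inE sub0set indep0.
have [I0 hI0 e] := eq_bigmax_cond (fun I : {set U} => #|I|) h.
exists I0; first by move: hI0; rewrite inE andbC.
by rewrite /rank -e.
Qed.

Lemma basis_card N B J : basis N B -> indep N J -> #|J| <= #|B|.
Proof.
move=> /andP[iB /forallP mB] iJ; rewrite leqNgt; apply/negP => lt.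
have [x /setDP[_ xB] ix] := indep_aug iB iJ lt.
have := mB (x |: B); rewrite ix subsetUr /= => /eqP e.
by move: xB; rewrite -e setU11.
Qed.

Definition cl N I := I :|: [set e in ground N | ~~ indep N (e |: I)].

Lemma cl_sub N I : indep N I -> cl N I \subset ground N.
Proof.
move=> iI; rewrite subUset (indep_ground iI) /=.
by apply/subsetP => e; rewrite inE => /andP[].
Qed.

Lemma cl_flat N I : indep N I -> flat N (cl N I).
Proof.
move=> iI; rewrite /flat cl_sub //=; apply/forallP => x; apply/implyP.
rewrite inE => /andP[xF xg].
have xI : x \notin I by apply: contra xF => xI; rewrite inE xI.
have ixI : indep N (x |: I).
  by move: xF; rewrite !inE negb_or xg /= negbK => /andP[].
have h1 : #|I|.+1 <= rank N (x |: cl N I).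
  have -> : #|I|.+1 = #|x |: I| by rewrite cardsU1 xI.
  apply: (@rank_ge N (x |: I) (x |: cl N I) ixI).
  by apply: setUS; rewrite subsetUl.
apply: leq_trans h1; rewrite ltnS.
have [J /andP[iJ sJ] ->] := rank_witness N (cl N I).
rewrite leqNgt; apply/negP => lt.
have [y /setDP[yJ yI] iy] := indep_aug iI iJ lt.
have := subsetP sJ y yJ; rewrite inE (negbTE yI) /= inE => /andP[_].
by rewrite iy.
Qed.

Lemma cl_basis N I : indep N I -> ground N \subset cl N I -> basis N I.
Proof.
move=> iI sg; rewrite /basis iI /=; apply/forallP => J; apply/implyP => /andP[iJ sIJ].
rewrite eqEsubset sIJ andbT; apply/subsetP => e eJ.
apply/negPn/negP => eI.
have eg : e \in ground N by apply: (subsetP (indep_ground iJ)).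
have := subsetP sg e eg; rewrite inE (negbTE eI) /= inE eg /=.
suff -> : indep N (e |: I) by [].
apply: indep_sub iJ; by rewrite subUset sub1set eJ.
Qed.

Lemma basis_flat N B F : basis N B -> flat N F -> B \subset F -> F = ground N.
Proof.
move=> bB /andP[sF /forallP fF] sBF; apply/eqP; rewrite eqEsubset sF /=.
apply/subsetP => x xg; apply/negPn/negP => xF.
have := fF x; rewrite inE xF xg /= => lt.
have [J /andP[iJ _] eJ] := rank_witness N (x |: F).
have h1 := basis_card bB iJ.
have h2 : #|B| <= rank N F by apply: rank_ge sBF; case/andP: bB.
by move: lt; rewrite eJ ltnNge (leq_trans h1 h2).
Qed.

Lemma max_indep N Y : exists2 B, indep N B && (B \subset Y) &
  forall e, e \in Y -> e \notin B -> ~~ indep N (e |: B).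
Proof.
have [B /andP[iB sB] eB] := rank_witness N Y.
exists B; first by rewrite iB sB.
move=> e eY eB'; apply/negP => ie.
have h : #|e |: B| <= rank N Y.
  by apply: (@rank_ge N (e |: B) Y ie); rewrite subUset sub1set eY sB.
by move: h; rewrite cardsU1 eB' eB ltnn.
Qed.

Lemma span_char N Y : Y \subset ground N ->
  (exists2 B, basis N B & B \subset Y) <-> (forall F, flat N F -> Y \subset F -> F = ground N).
Proof.
move=> sY; split.
  move=> [B bB sBY] F fF sYF; apply: basis_flat bB fF (subset_trans sBY sYF).
move=> H.
have [B /andP[iB sBY] mB] := max_indep N Y.
exists B => //; apply: (@cl_basis N B iB).
suff -> : cl N B = ground N by [].
apply: H; first exact: cl_flat.
apply/subsetP => e eY; rewrite inE; case eB: (e \in B) => //=.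
by rewrite inE (subsetP sY e eY) mB ?eB.
Qed.
End Gen.

End PG.
Import PG.

Module PG2.
Set Implicit Arguments. Unset Strict Implicit. Unset Printing Implicit Defensive.

Section Gen2.
Variable U : finType.
Implicit Types (N : matroid U) (X Y I J B F : {set U}).

Lemma coindep_char N X : X \subset ground N ->
  (coindep N X <-> forall F, flat N F -> ground N :\: X \subset F -> F = ground N).
Proof.
move=> sX; have [E1 E2] := span_char (subsetDl (ground N) X).
rewrite /coindep sX /=; split.
  move=> /existsP[B /andP[bB dB]]; apply: E1; exists B => //.
  by rewrite subsetD (indep_ground (proj1 (andP bB))) disjoint_sym.
move=> /E2 [B bB]; rewrite subsetD => /andP[_ dB]; apply/existsP; exists B.
by rewrite bB disjoint_sym.
Qed.

Lemma del_coindep (P : matroid U) T X :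
  (forall F, flat P F -> ground P :\: T \subset F -> F = ground P) ->
  X \subset ground P :\: T ->
  (coindep (delete P T) X <->
     forall F, flat P F -> (ground P :\: T) :\: X \subset F -> F = ground P).
Proof.
move=> hT sX.
have sY : (ground P :\: T) :\: X \subset ground P.
  by apply: subset_trans (subsetDl _ _) (subsetDl _ _).
have [E1 E2] := span_char sY.
rewrite /coindep /= sX /=; split.
  move=> /existsP[B /andP[/andP[iBd mB] dB]].
  move: iBd => /andP[iB sB].
  have bP : basis P B.
refine (@cl_basis U P B iB _).
    suff -> : cl P B = ground P by [].
    apply: hT; first exact: cl_flat.
    apply/subsetP => e eg; rewrite inE; case eB: (e \in B) => //=.
    rewrite inE (subsetP (subsetDl _ _) e eg) /=.
    apply/negP => ie.
    have := (forallP mB) (e |: B); rewrite /= ie /= subUset sub1set eg sB subsetUr /=.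
    move=> /eqP e'. by move: eB; rewrite -e' setU11.
  apply: E1; exists B => //.
  by rewrite subsetD sB disjoint_sym.
move=> /E2 [B bB]; rewrite subsetD => /andP[sB dB]; apply/existsP; exists B.
rewrite disjoint_sym dB andbT.
case/andP: bB => iB mB.
rewrite /basis /= iB sB /=; apply/forallP => J; apply/implyP => /andP[/andP[iJ _] sBJ].
by have := (forallP mB) J; rewrite iJ sBJ.
Qed.
End Gen2.

End PG2.
Import PG2.

Module PB.
Set Implicit Arguments. Unset Strict Implicit. Unset Printing Implicit Defensive.
Import GRing.Theory.
Local Open Scope ring_scope.

Lemma F2_11 : (1 + 1 : 'F_2) = 0. Proof. by apply/val_inj. Qed.
Lemma F2_10 : (1 : 'F_2) != 0. Proof. by apply/eqP => /(congr1 val). Qed.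

Lemma vv0 n (v : 'rV['F_2]_n) : v + v = 0.
Proof. by rewrite -{1 2}[v]scale1r -scalerDl F2_11 scale0r. Qed.

Section Bin.
Variable U : finType.
Variable M : matroid U.
Variable n : nat.
Variable f : U -> 'rV['F_2]_n.
Hypothesis hf : forall X, indep M X = (X \subset ground M) && free [seq f x | x <- enum X].

Definition sp (X : {set U}) := <<[seq f x | x <- enum X]>>%VS.

Lemma sp_mem (X : {set U}) x : x \in X -> f x \in sp X.
Proof. by move=> xX; apply: memv_span; apply: map_f; rewrite mem_enum. Qed.

Lemma sp_sub (X : {set U}) (V : {vspace 'rV['F_2]_n}) : (forall x, x \in X -> f x \in V) -> (sp X <= V)%VS.
Proof. by move=> H; apply/span_subvP => v /mapP[x]; rewrite mem_enum => /H ? ->. Qed.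

Lemma V1 (I : {set U}) x : indep M I -> x \in ground M -> x \notin I ->
  indep M (x |: I) = (f x \notin sp I).
Proof.
move=> iI xg xI; move: (iI); rewrite !hf => /andP[sI frI].
have pe : perm_eq (enum (x |: I)) (x :: enum I).
  apply: uniq_perm; first exact: enum_uniq.
    by rewrite /= mem_enum xI enum_uniq.
  by move=> y; rewrite mem_enum in_cons mem_enum in_setU1.
rewrite subUset sub1set xg sI /=.
by rewrite (perm_free (perm_map f pe)) /= free_cons frI andbT.
Qed.

Lemma dim_sp_free (X : {set U}) : indep M X -> \dim (sp X) = #|X|.
Proof. by rewrite hf => /andP[_ /eqP]; rewrite size_map -cardE. Qed.

Lemma dim_sp (X : {set U}) : (\dim (sp X) <= #|X|)%N.
Proof. by rewrite cardE -(size_map f); apply: dim_span. Qed.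

Lemma BF1 (F : {set U}) e : flat M F -> e \in ground M -> e \notin F -> f e \notin sp F.
Proof.
move=> fF eg eF; case/andP: (fF) => sF /forallP fa.
have [I /andP[iI sIF] rI] := rank_witness M F.
have spFI : (sp F <= sp I)%VS.
  apply: sp_sub => u uF; case uI: (u \in I); first exact: sp_mem.
  apply/negPn/negP => nu.
  have iu : indep M (u |: I) by rewrite V1 // ?uI // (subsetP sF).
  have := @rank_ge U M (u |: I) F iu.
  by rewrite subUset sub1set uF sIF rI cardsU1 uI ltnn => /(_ isT).
apply/negP => efF.
have := fa e; rewrite inE eF eg /= => lt.
have [J /andP[iJ sJ] rJ] := rank_witness M (e |: F).
have spJI : (sp J <= sp I)%VS.
  apply: sp_sub => j jJ; move: (subsetP sJ j jJ); rewrite in_setU1 => /orP[/eqP->|jF].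
    exact: (subvP spFI).
  by apply: (subvP spFI); apply: sp_mem.
have := dimvS spJI; rewrite dim_sp_free // => h.
have h2 := leq_trans h (dim_sp I).
by move: lt; rewrite rJ rI ltnNge h2.
Qed.

Definition Kset (w : 'cV['F_2]_n) := [set e in ground M | dot (f e) w != 0].

Lemma Kset_sub w : Kset w \subset ground M.
Proof. by apply/subsetP => e; rewrite inE => /andP[]. Qed.

Lemma BF2 w : flat M (ground M :\: Kset w).
Proof.
rewrite /flat subsetDl /=; apply/forallP => x; apply/implyP.
rewrite !inE negb_and negbK => /andP[/orP[xK|xg'] xg]; last by rewrite xg in xg'.
move: xK => /andP[_ dx].
have [I /andP[iI sI] rI] := rank_witness M (ground M :\: Kset w).
have xI : x \notin I.
  apply/negP => /(subsetP sI); rewrite !inE xg /= dx.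
  by [].
have nsp : f x \notin sp I.
  apply/negP => /V2 h; move: dx; rewrite h //.
  move=> v /mapP[y]; rewrite mem_enum => yI ->.
  by move: (subsetP sI y yI); rewrite !inE => /andP[hh yg]; move: hh; rewrite yg /= negbK => /eqP.
have ix : indep M (x |: I) by rewrite V1.
have := @rank_ge U M (x |: I) (x |: (ground M :\: Kset w)) ix.
rewrite cardsU1 xI rI; apply; exact: setUS.
Qed.

Lemma dot0 u : dot u (0 : 'cV['F_2]_n) = 0.
Proof. by rewrite /dot mulmx0 mxE. Qed.

Lemma F2neq (x y : 'F_2) : (x + y != 0) = (x != 0) (+) (y != 0).
Proof.
case: (F2cases x) => ->; case: (F2cases y) => ->;
by rewrite ?addr0 ?add0r ?F2_11 ?eqxx ?F2_10.
Qed.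

Lemma Kset0 : Kset 0 = set0.
Proof. by apply/setP => e; rewrite !inE dot0 eqxx andbF. Qed.

Lemma KsetD w w' : Kset (w + w') = symdiff (Kset w) (Kset w').
Proof.
apply/setP => e; rewrite /symdiff !inE dotDr F2neq.
by case: (e \in ground M); case: (dot (f e) w != 0); case: (dot (f e) w' != 0).
Qed.

Lemma flat_cocyc (F : {set U}) e : flat M F -> e \in ground M -> e \notin F ->
  exists w, e \in Kset w /\ Kset w \subset ground M :\: F.
Proof.
move=> fF eg eF; have := BF1 fF eg eF => /V3 [w [h0 h1]].
exists w; split; first by rewrite inE eg h1.
apply/subsetP => d; rewrite !inE => /andP[dg dd]; rewrite dg andbT.
apply/negP => dF; move: dd; rewrite h0 ?eqxx //.
by apply: map_f; rewrite mem_enum.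
Qed.

Lemma flat_tri (F : {set U}) x y z : flat M F -> x \in F -> z \in F -> y \in ground M ->
  f y = f x + f z -> y \in F.
Proof.
move=> fF xF zF yg e; apply/negPn/negP => yF.
have := BF1 fF yg yF; rewrite e; apply/negP/negPn.
by apply: rpredD; apply: sp_mem.
Qed.

Lemma flat_cocyc2 (F : {set U}) x y z : flat M F -> x \in ground M -> y \in ground M ->
  x \notin F -> y \notin F -> f y = f x + f z ->
  exists w, [/\ x \in Kset w, y \in Kset w, dot (f z) w = 0 & Kset w \subset ground M :\: F].
Proof.
move=> fF xg yg xF yF e.
have nsp : f x \notin <<f z :: [seq f u | u <- enum F]>>%VS.
  rewrite span_cons; apply/negP => /memv_addP [u uz [v vF ev]].
  move/vlineP: uz => [k ek]; rewrite ek in ev; case: (F2cases k) => hk; rewrite hk in ev.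
    by move: ev; rewrite scale0r add0r => exv; move: (BF1 fF xg xF); rewrite exv vF.
  move: ev; rewrite scale1r => exv.
  have : f y = v by rewrite e exv addrAC vv0 add0r.
  by move=> eyv; move: (BF1 fF yg yF); rewrite eyv vF.
have [w [h0 h1]] := V3 nsp.
have dz : dot (f z) w = 0 by apply: h0; rewrite in_cons eqxx.
exists w; split => //.
- by rewrite inE xg h1.
- by rewrite inE yg e dotDl dz addr0 h1.
apply/subsetP => d; rewrite !inE => /andP[dg dd]; rewrite dg andbT.
apply/negP => dF; move: dd; rewrite h0 ?eqxx //.
by rewrite in_cons; apply/orP; right; apply: map_f; rewrite mem_enum.
Qed.

Lemma bin_coindep (X : {set U}) : X \subset ground M ->
  (coindep M X <-> ~ exists w, Kset w != set0 /\ Kset w \subset X).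
Proof.
move=> sX; have [C1 C2] := coindep_char sX; split.
  move=> /C1 H [w [ne sK]].
  have := H _ (BF2 w) (setDS _ sK) => e.
  case/set0Pn: ne => d dK; have dg := subsetP (Kset_sub w) d dK.
  by move: dg; rewrite -{1}e inE dK.
move=> H; apply: C2 => F fF sF; apply/eqP; rewrite eqEsubset (proj1 (andP fF)) /=.
apply/subsetP => e eg; apply/negPn/negP => eF.
have [w [ew sw]] := flat_cocyc fF eg eF; apply: H; exists w; split.
  by apply/set0Pn; exists e.
apply/subsetP => d dK; move: (subsetP sw d dK); rewrite inE => /andP[dF dg].
by apply/negPn/negP => dX; move: dF; rewrite (subsetP sF) // inE dX.
Qed.

Lemma tri_sum (T : {set U}) a b c : triangle M T -> T = [set a; b; c] ->
  a != b -> a != c -> b != c -> f c = f a + f b.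
Proof.
move=> /andP[/and3P[Tg nT /forallP pT] _] eT ab ac bc.
have hp : forall D : {set U}, D \subset T -> forall y, y \in T -> y \notin D -> indep M D.
  move=> D sD y yT yD; have := pT D; rewrite properE sD /=.
  have -> : ~~ (T \subset D) by apply/subsetPn; exists y.
  by [].
have aT : a \in T by rewrite eT !inE eqxx.
have bT : b \in T by rewrite eT !inE eqxx orbT.
have cT : c \in T by rewrite eT !inE eqxx !orbT.
have ag := subsetP Tg a aT; have bg := subsetP Tg b bT; have cg := subsetP Tg c cT.
have ia : indep M [set a].
  apply: (hp _ _ b) => //; first by rewrite sub1set. by rewrite inE eq_sym.
have iab : indep M (b |: [set a]).
  apply: (hp _ _ c) => //; first by rewrite subUset !sub1set bT aT.
  by rewrite !inE negb_or eq_sym bc eq_sym ac.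
have fc : f c \in sp (b |: [set a]).
  apply/negPn; rewrite -V1 //; last by rewrite !inE negb_or eq_sym bc eq_sym ac.
  suff <- : T = c |: (b |: [set a]) by [].
  by rewrite eT; apply/setP => x; rewrite !inE; case: (x == a); case: (x == b); case: (x == c).
have : f c \in (<[f a]> + <[f b]>)%VS.
  apply: (subvP (sp_sub (V := (<[f a]> + <[f b]>)%VS) _) _ fc).
  move=> x; rewrite !inE => /orP[/eqP->|/eqP->].
    by have := memv_add (mem0v <[f a]>%VS) (memv_line (f b)); rewrite add0r.
  by have := memv_add (memv_line (f a)) (mem0v <[f b]>%VS); rewrite addr0.
move=> /memv_addP [u /vlineP [k1 ->] [v /vlineP [k2 ->] ec]].
case: (F2cases k1) => h1; case: (F2cases k2) => h2; rewrite h1 h2 ?scale0r ?scale1r ?addr0 ?add0r in ec => //.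
- have ic : indep M (c |: set0).
    apply: (hp _ _ a) => //; first by rewrite setU0 sub1set.
    by rewrite !inE orbF.
  by move: ic; rewrite V1 ?indep0 ?inE // ec mem0v.
- have ic : indep M (c |: [set b]).
    apply: (hp _ _ a) => //; first by rewrite subUset !sub1set cT bT.
    by rewrite !inE negb_or ac ab.
  have ib : indep M [set b].
    by apply: (hp _ _ a) => //; rewrite ?sub1set ?inE // ab.
  have cb : c \notin [set b] by rewrite inE eq_sym bc.
  by move: ic; rewrite (V1 ib cg cb) ec sp_mem // inE.
- have ic : indep M (c |: [set a]).
    apply: (hp _ _ b) => //; first by rewrite subUset !sub1set cT aT.
    by rewrite !inE negb_or bc eq_sym ab.
  have ca : c \notin [set a] by rewrite inE eq_sym ac.
  by move: ic; rewrite (V1 ia cg ca) ec sp_mem // inE.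
Qed.

Lemma Kset_par w a b c : a \in ground M -> b \in ground M -> c \in ground M ->
  f c = f a + f b -> (c \in Kset w) = (a \in Kset w) (+) (b \in Kset w).
Proof. by move=> ag bg cg e; rewrite !inE ag bg cg e dotDl F2neq. Qed.
End Bin.

End PB.
Import PB.

Module PC.
Set Implicit Arguments. Unset Strict Implicit. Unset Printing Implicit Defensive.

Section One.
Variable U : finType.
Implicit Types (X Y D C : {set U}).

Definition minK (K : {set U} -> Prop) C :=
  [/\ K C, C != set0 & forall D, K D -> D != set0 -> D \subset C -> D = C].

Lemma L1 (K : {set U} -> Prop) D : K D -> D != set0 -> exists C, minK K C /\ C \subset D.
Proof.
move: {2}#|D|.+1 (ltnSn #|D|) => m; elim: m D => // m IH D hD KD nD.
case: (classic (forall D', K D' -> D' != set0 -> D' \subset D -> D' = D)) => h.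
  by exists D; split.
have [D' h'] := not_all_ex_not _ _ h.
have [KD' h2] := imply_to_and _ _ h'.
have [nD' h3] := imply_to_and _ _ h2.
have [sD' neq] := imply_to_and _ _ h3.
have pD' : D' \proper D by rewrite properEneq sD' andbT; apply/eqP.
have [C [mC sC]] := IH D' (leq_trans (proper_card pD') hD) KD' nD'.
by exists C; split => //; apply: subset_trans sC sD'.
Qed.

Lemma L2 (K : {set U} -> Prop) D x : (forall X Y, K X -> K Y -> K (symdiff X Y)) ->
  K D -> x \in D -> exists C, [/\ minK K C, C \subset D & x \in C].
Proof.
move=> KD; move: {2}#|D|.+1 (ltnSn #|D|) => m; elim: m D => // m IH D hD KDD xD.
have nD : D != set0 by apply/set0Pn; exists x.
have [C0 [[KC0 nC0 mC0] sC0]] := L1 KDD nD.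
case xC0: (x \in C0); first by exists C0; split.
have KD' := KD _ _ KDD KC0.
have sD' : symdiff D C0 \subset D.
  apply/subsetP => z; rewrite /symdiff !inE => /orP[/andP[_ ->]//|/andP[zD zC]].
  by rewrite (subsetP sC0 z zC) in zD.
have pD' : symdiff D C0 \proper D.
  case/set0Pn: nC0 => y yC0; apply/properP; split => //; exists y.
    exact: (subsetP sC0).
  by rewrite /symdiff !inE yC0 /= (subsetP sC0 y yC0).
have xD' : x \in symdiff D C0 by rewrite /symdiff !inE xD xC0.
have [C [mC sC xC]] := IH _ (leq_trans (proper_card pD') hD) KD' xD'.
by exists C; split => //; apply: subset_trans sC sD'.
Qed.
End One.

End PC.
Import PC.

Module PC2.
Set Implicit Arguments. Unset Strict Implicit. Unset Printing Implicit Defensive.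

Ltac bsolve := repeat (match goal with |- context [?x \in ?S] => let h := fresh in case h: (x \in S) end);
  rewrite /= ?andbT ?andbF ?orbT ?orbF; intros; try discriminate; try done.

Definition DD (U : finType) (T : {set U}) (K1 K2 : {set U} -> Prop) (X : {set U}) :=
  exists D1 D2, [/\ K1 D1, K2 D2, D1 :&: T = D2 :&: T & X = (D1 :|: D2) :\: T].

Lemma DD_sym (U : finType) T (K1 K2 : {set U} -> Prop) X : DD T K1 K2 X -> DD T K2 K1 X.
Proof. by case=> D1 [D2 [k1 k2 e ->]]; exists D2, D1; split => //; rewrite setUC. Qed.

Lemma minK_ext (U : finType) (K K' : {set U} -> Prop) C : (forall X, K X -> K' X) -> (forall X, K' X -> K X) ->
  minK K C -> minK K' C.
Proof. by move=> h1 h2 [k n m]; split => // [|D /h2]; [apply: h1|exact: m]. Qed.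

Lemma memeq (U : finType) (X Y : {set U}) z : X = Y -> (z \in X) = (z \in Y).
Proof. by move->. Qed.

Section Comb.
Variables (U : finType) (E1 E2 T : {set U}) (a b c : U) (K1 K2 : {set U} -> Prop).
Hypotheses (hE : E1 :&: E2 = T) (hT : T = [set a; b; c]) (ab : a != b) (ac : a != c) (bc : b != c).
Hypotheses (K10 : K1 set0) (K1D : forall X Y, K1 X -> K1 Y -> K1 (symdiff X Y))
  (K1s : forall X, K1 X -> X \subset E1) (K1p : forall X, K1 X -> (c \in X) = (a \in X) (+) (b \in X))
  (K1T : forall X, K1 X -> X \subset T -> X = set0).
Hypotheses (K20 : K2 set0) (K2D : forall X Y, K2 X -> K2 Y -> K2 (symdiff X Y))
  (K2s : forall X, K2 X -> X \subset E2) (K2p : forall X, K2 X -> (c \in X) = (a \in X) (+) (b \in X))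
  (K2T : forall X, K2 X -> X \subset T -> X = set0).

Lemma inT z : (z \in T) = [|| z == a, z == b | z == c].
Proof. by rewrite hT !inE orbA. Qed.

Lemma E12 z : (z \in E1) && (z \in E2) ==> (z \in T).
Proof. by rewrite -hE inE implybb. Qed.

Lemma T1 z : (z \in T) ==> (z \in E1).
Proof. by rewrite -hE inE; apply/implyP => /andP[]. Qed.
Lemma T2 z : (z \in T) ==> (z \in E2).
Proof. by rewrite -hE inE; apply/implyP => /andP[]. Qed.

Lemma subb (X Y : {set U}) z : X \subset Y -> (z \in X) ==> (z \in Y).
Proof. by move=> s; apply/implyP => /(subsetP s). Qed.

Lemma pat_eq (X Y : {set U}) : (c \in X) = (a \in X) (+) (b \in X) -> (c \in Y) = (a \in Y) (+) (b \in Y) ->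
  (a \in X) = (a \in Y) -> (b \in X) = (b \in Y) -> X :&: T = Y :&: T.
Proof.
move=> pX pY ea eb; apply/setP => z; rewrite !inE inT.
case: (eqVneq z a) => [->|_]; first by rewrite ea.
case: (eqVneq z b) => [->|_]; first by rewrite eb.
case: (eqVneq z c) => [->|_]; last by rewrite !andbF.
by rewrite pX pY ea eb.
Qed.

Lemma pat0 (X : {set U}) : (c \in X) = (a \in X) (+) (b \in X) ->
  (X :&: T == set0) = ~~ (a \in X) && ~~ (b \in X).
Proof.
move=> pX; apply/idP/idP.
  move=> /eqP e; have ha := memeq a e; have hb := memeq b e.
  by move: ha hb; rewrite !inE !inT !eqxx /= ?orbT ?andbT => -> ->.
move=> /andP[/negbTE na /negbTE nb]; apply/eqP/setP => z; rewrite !inE inT.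
case: (eqVneq z a) => [->|_]; first by rewrite na.
case: (eqVneq z b) => [->|_]; first by rewrite nb.
case: (eqVneq z c) => [->|_]; last by rewrite !andbF.
by rewrite pX na nb.
Qed.

Lemma pat2 (X : {set U}) : (c \in X) = (a \in X) (+) (b \in X) ->
  X :&: T != set0 -> #|X :&: T| = 2.
Proof.
move=> pX; rewrite pat0 // negb_and !negbK.
have ba : b != a by rewrite eq_sym.
have ca : c != a by rewrite eq_sym.
have cb : c != b by rewrite eq_sym.
case Ha: (a \in X); case Hb: (b \in X) => //= _; rewrite Ha Hb /= in pX.
- have -> : X :&: T = [set a; b].
    apply/setP => z; rewrite !inE inT.
    case: (eqVneq z a) => [->|za]; first by rewrite Ha.
    case: (eqVneq z b) => [->|zb]; first by rewrite Hb.
    case: (eqVneq z c) => [->|_]; last by rewrite !andbF.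
    by rewrite pX.
  by rewrite cards2 ab.
- have -> : X :&: T = [set a; c].
    apply/setP => z; rewrite !inE inT.
    case: (eqVneq z a) => [->|za]; first by rewrite Ha.
    case: (eqVneq z b) => [->|zb]; first by rewrite Hb /= (negbTE bc).
    case: (eqVneq z c) => [->|_]; last by rewrite !andbF.
    by rewrite pX.
  by rewrite cards2 ac.
- have -> : X :&: T = [set b; c].
    apply/setP => z; rewrite !inE inT.
    case: (eqVneq z a) => [->|za]; first by rewrite Ha /= ?(negbTE ab) ?(negbTE ac).
    case: (eqVneq z b) => [->|zb]; first by rewrite Hb.
    case: (eqVneq z c) => [->|_]; last by rewrite !andbF.
    by rewrite pX.
  by rewrite cards2 bc.
Qed.

Lemma SD C1 C2 : K1 C1 -> K2 C2 -> C1 :&: T = C2 :&: T -> symdiff C1 C2 = (C1 :|: C2) :\: T.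
Proof.
move=> k1 k2 e; apply/setP => z.
have h1 := subb z (K1s k1); have h2 := subb z (K2s k2); have h3 := E12 z; have h4 := memeq z e.
move: h1 h2 h3 h4; rewrite /symdiff !inE; bsolve.
Qed.

Lemma DD1 (KA KB : {set U} -> Prop) D : KB set0 -> KA D -> D :&: T = set0 -> DD T KA KB D.
Proof.
move=> kB kA e; exists D, set0; split => //; first by rewrite set0I.
by apply/setP => z; move: (memeq z e); rewrite !inE; bsolve.
Qed.

Lemma case0 (KA KB : {set U} -> Prop) C D : KB set0 -> minK (DD T KA KB) C -> KA D ->
  D :&: T = set0 -> D != set0 -> D \subset C ->
  [/\ C = D, minK KA C & [disjoint C & T]].
Proof.
move=> kB [dC nC mC] kD eD nD sD.
have eCD : D = C := mC D (DD1 kB kD eD) nD sD.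
subst C; split => //; last by rewrite -setI_eq0 eD.
split => // Y kY nY sY.
have eY : Y :&: T = set0 by apply/eqP; rewrite -subset0 -eD; exact: setSI.
exact: mC Y (DD1 kB kY eY) nY sY.
Qed.

Lemma CI C : minK (DD T K1 K2) C ->
  (minK K1 C /\ [disjoint C & T]) \/ (minK K2 C /\ [disjoint C & T]) \/
  exists C1 C2, [/\ minK K1 C1, minK K2 C2, C1 :&: T = C2 :&: T, #|C1 :&: T| = 2 &
                    C = symdiff C1 C2].
Proof.
move=> mC; case: (mC) => [[D1 [D2 [k1 k2 e eC]]] nC mC'].
case e0: (D1 :&: T == set0).
  move/eqP: e0 => e1; have e2 : D2 :&: T = set0 by rewrite -e.
  case n1: (D1 == set0).
    have n2 : D2 != set0.
      apply: contraNneq nC => h2; move/eqP: n1 => h1.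
      by rewrite eC h1 h2 setU0 set0D.
    have sD2 : D2 \subset C.
      by apply/subsetP => z zD2; move: (memeq z e2); rewrite eC !inE zD2 orbT /= => ->.
    have mC2 : minK (DD T K2 K1) C.
      by apply: minK_ext mC => X; apply: DD_sym.
    have [_ m2 d2] := case0 K10 mC2 k2 e2 n2 sD2.
    by right; left.
  have sD1 : D1 \subset C.
    by apply/subsetP => z zD1; move: (memeq z e1); rewrite eC !inE zD1 /= => ->.
  have [_ m1 d1] := case0 K20 mC k1 e1 (negbT n1) sD1.
  by left.
right; right.
case/set0Pn: (negbT e0) => x; rewrite inE => /andP[xD1 xT].
have xD2 : x \in D2 by move: (memeq x e); rewrite !inE xD1 xT /= andbT => <-.
have [C1 [m1 s1 x1]] := L2 K1D k1 xD1.
have [C2 [m2 s2 x2]] := L2 K2D k2 xD2.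
have k1' : K1 C1 by case: m1.
have k2' : K2 C2 by case: m2.
have nD1 : D1 :&: T != set0 by rewrite e0.
have nD2 : D2 :&: T != set0 by rewrite -e.
have nC1 : C1 :&: T != set0 by apply/set0Pn; exists x; rewrite inE x1 xT.
have nC2 : C2 :&: T != set0 by apply/set0Pn; exists x; rewrite inE x2 xT.
have eC1 : C1 :&: T = D1 :&: T.
  by apply/eqP; rewrite eqEcard setSI //= pat2 ?K1p // pat2 ?K1p.
have eC2 : C2 :&: T = D2 :&: T.
  by apply/eqP; rewrite eqEcard setSI //= pat2 ?K2p // pat2 ?K2p.
have eC12 : C1 :&: T = C2 :&: T by rewrite eC1 e -eC2.
have sC : (C1 :|: C2) :\: T \subset C.
  apply/subsetP => z; move: (subb z s1) (subb z s2); rewrite eC !inE; bsolve.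
have nC' : (C1 :|: C2) :\: T != set0.
  have : ~~ (C1 \subset T).
    by apply/negP => /(K1T k1') e'; rewrite e' inE in x1.
  by case/subsetPn => z zC1 zT; apply/set0Pn; exists z; rewrite !inE zC1 zT.
have dd : DD T K1 K2 ((C1 :|: C2) :\: T) by exists C1, C2.
have eq := mC' _ dd nC' sC.
exists C1, C2; split => //; first by rewrite pat2 ?K1p.
by rewrite -eq SD.
Qed.

Lemma CIIa C : minK K1 C -> [disjoint C & T] -> minK (DD T K1 K2) C.
Proof.
move=> [k n m]; rewrite -setI_eq0 => /eqP dC.
split => //; first exact: DD1.
move=> Y [H1 [H2 [k1 k2 e eY]]] nY sY.
have sH2 : H2 \subset T.
  apply/subsetP => z zH2; move: (subb z sY) (subb z (K1s k)) (subb z (K2s k2)) (E12 z) zH2.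
  by rewrite eY !inE; bsolve.
have h2 := K2T k2 sH2; subst H2.
have e1 : H1 :&: T = set0 by rewrite e set0I.
have eYH : Y = H1.
  by apply/setP => z; move: (memeq z e1); rewrite eY !inE; bsolve.
by rewrite eYH in nY sY *; apply: m.
Qed.

Lemma uniq_below (K : {set U} -> Prop) C G G' : (forall X Y, K X -> K Y -> K (symdiff X Y)) ->
  minK K C -> C :&: T != set0 -> K G -> K G' -> G :\: T \subset C -> G' :\: T \subset C ->
  G :&: T = G' :&: T -> G = G'.
Proof.
move=> KD [kC nC mC] nCT kG kG' s s' e.
have kH := KD _ _ kG kG'.
have sH : symdiff G G' \subset C.
  by apply/subsetP => z; move: (memeq z e) (subb z s) (subb z s'); rewrite /symdiff !inE; bsolve.
have eH : symdiff G G' :&: T = set0.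
  by apply/setP => z; move: (memeq z e); rewrite /symdiff !inE; bsolve.
case nH: (symdiff G G' == set0).
  by move/eqP: nH => nH; apply/setP => z; move: (memeq z nH); rewrite /symdiff !inE; bsolve.
have := mC _ kH (negbT nH) sH => eHC.
by move: nCT; rewrite -eHC eH eqxx.
Qed.

Lemma out1 H : K1 H -> H :&: T != set0 -> exists z, [/\ z \in H, z \notin T & z \in E1].
Proof.
move=> kH nH; have : ~~ (H \subset T).
  apply/negP => /(K1T kH) e; by move: nH; rewrite e set0I eqxx.
case/subsetPn => z zH zT; exists z; split => //; exact: (subsetP (K1s kH)).
Qed.

Lemma out2 H : K2 H -> H :&: T != set0 -> exists z, [/\ z \in H, z \notin T & z \in E2].
Proof.
move=> kH nH; have : ~~ (H \subset T).
  apply/negP => /(K2T kH) e; by move: nH; rewrite e set0I eqxx.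
case/subsetPn => z zH zT; exists z; split => //; exact: (subsetP (K2s kH)).
Qed.

Lemma disj_sub0 (A B : {set U}) : A \subset B -> [disjoint A & B] -> A = set0.
Proof. by move=> s; rewrite -setI_eq0 => /eqP; move/setIidPl: s => ->. Qed.

Lemma CIIb C1 C2 : minK K1 C1 -> minK K2 C2 -> C1 :&: T = C2 :&: T -> #|C1 :&: T| = 2 ->
  minK (DD T K1 K2) (symdiff C1 C2) \/
  exists R Q, [/\ minK (DD T K1 K2) R, minK (DD T K1 K2) Q, [disjoint R & Q],
     symdiff C1 C2 = R :|: Q &
     [/\ R :&: E1 != set0, R :&: E2 != set0, Q :&: E1 != set0 & Q :&: E2 != set0]].
Proof.
move=> m1 m2 e12 c2.
have k1 : K1 C1 by case: m1.
have k2 : K2 C2 by case: m2.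
have nW : C1 :&: T != set0 by rewrite -card_gt0 c2.
have nW2 : C2 :&: T != set0 by rewrite -e12.
set S := symdiff C1 C2.
have eS : S = (C1 :|: C2) :\: T by apply: SD.
have dS : DD T K1 K2 S by exists C1, C2.
have nS : S != set0.
  have [z [zC zT _]] := out1 k1 nW.
  by apply/set0Pn; exists z; rewrite eS !inE zC zT.
case: (classic (minK (DD T K1 K2) S)) => hS; [by left | right].
have : ~ (forall D, DD T K1 K2 D -> D != set0 -> D \subset S -> D = S).
  by move=> h; apply: hS.
move/not_all_ex_not => [X hX].
have [dX hX2] := imply_to_and _ _ hX.
have [nX hX3] := imply_to_and _ _ hX2.
have [sX neX] := imply_to_and _ _ hX3.
have belowL : forall H1 H2, K1 H1 -> K2 H2 -> (H1 :|: H2) :\: T \subset S ->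
    H1 :\: T \subset C1 /\ H2 :\: T \subset C2.
  move=> H1 H2 kH1 kH2 sH; rewrite eS in sH; split; apply/subsetP => z;
  move: (subb z sH) (subb z (K1s kH1)) (subb z (K2s kH2)) (subb z (K1s k1)) (subb z (K2s k2)) (E12 z);
  rewrite !inE; bsolve.
case: (dX) => G1 [G2 [kG1 kG2 eG eX]].
have [sG1 sG2] : G1 :\: T \subset C1 /\ G2 :\: T \subset C2 by apply: belowL => //; rewrite -eX.
have U1 := uniq_below K1D m1 nW.
have U2 := uniq_below K2D m2 nW2.
have s01 : set0 :\: T \subset C1 by rewrite set0D sub0set.
have s02 : set0 :\: T \subset C2 by rewrite set0D sub0set.
have nZ : G1 :&: T != set0.
  apply/negP => /eqP z1.
  have g1 : G1 = set0 by apply: U1 => //; rewrite set0I.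
  have g2 : G2 = set0 by apply: U2 => //; rewrite set0I -eG.
  by move: nX; rewrite eX g1 g2 setU0 set0D eqxx.
have nZW : G1 :&: T != C1 :&: T.
  apply/negP => /eqP z1.
  have g1 : G1 = C1 by apply: U1 => //; rewrite subDset subsetUr.
  have g2 : G2 = C2 by apply: U2 => //; [rewrite subDset subsetUr | rewrite -eG z1].
  by apply: neX; rewrite eX g1 g2 eS.
set Q := (symdiff C1 G1 :|: symdiff C2 G2) :\: T.
have kQ1 := K1D k1 kG1.
have kQ2 := K2D k2 kG2.
have eQ : symdiff C1 G1 :&: T = symdiff C2 G2 :&: T.
  by apply/setP => z; move: (memeq z e12) (memeq z eG); rewrite /symdiff !inE; bsolve.
have dQ : DD T K1 K2 Q by exists (symdiff C1 G1), (symdiff C2 G2).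
have sQ1 : symdiff C1 G1 :\: T \subset C1.
  by apply/subsetP => z; move: (subb z sG1); rewrite /symdiff !inE; bsolve.
have sQ2 : symdiff C2 G2 :\: T \subset C2.
  by apply/subsetP => z; move: (subb z sG2); rewrite /symdiff !inE; bsolve.
have classif : forall Y, DD T K1 K2 Y -> Y \subset S -> [\/ Y = set0, Y = S, Y = X | Y = Q].
  move=> Y [H1 [H2 [kH1 kH2 eH eY]]] sY.
  rewrite eY in sY; have [sH1 sH2] := belowL _ _ kH1 kH2 sY.
  have pW := K1p k1; have pZ := K1p kG1; have pV := K1p kH1.
  move: nW nZ nZW; rewrite !pat0 // => nW' nZ' nZW'.
  have nZW'' : ~~ (((a \in G1) == (a \in C1)) && ((b \in G1) == (b \in C1))).
    apply: contra nZW' => /andP[/eqP h1 /eqP h2]; apply/eqP; exact: pat_eq.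
  have taut : [|| ~~ (a \in H1) && ~~ (b \in H1),
               ((a \in H1) == (a \in C1)) && ((b \in H1) == (b \in C1)),
               ((a \in H1) == (a \in G1)) && ((b \in H1) == (b \in G1)) |
               ((a \in H1) == (a \in C1) (+) (a \in G1)) && ((b \in H1) == (b \in C1) (+) (b \in G1))].
    move: nW' nZ' nZW''; case: (a \in C1); case: (b \in C1); case: (a \in G1); case: (b \in G1);
    case: (a \in H1); case: (b \in H1) => //.
  case/or4P: taut.
  - rewrite -pat0 // => /eqP h1.
    have g1 : H1 = set0 by apply: U1 => //; rewrite set0I.
    have g2 : H2 = set0 by apply: U2 => //; rewrite set0I -eH.
    by constructor 1; rewrite eY g1 g2 setU0 set0D.
  - move=> /andP[/eqP h1 /eqP h2].
    have t1 : H1 :&: T = C1 :&: T by apply: pat_eq.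
    have g1 : H1 = C1 by apply: U1 => //; rewrite subDset subsetUr.
    have g2 : H2 = C2 by apply: U2 => //; [rewrite subDset subsetUr | rewrite -eH t1].
    by constructor 2; rewrite eY g1 g2 eS.
  - move=> /andP[/eqP h1 /eqP h2].
    have t1 : H1 :&: T = G1 :&: T by apply: pat_eq.
    have g1 : H1 = G1 by apply: U1.
    have g2 : H2 = G2 by apply: U2 => //; rewrite -eH t1.
    by constructor 3; rewrite eY g1 g2 eX.
  - move=> /andP[/eqP h1 /eqP h2].
    have t1 : H1 :&: T = symdiff C1 G1 :&: T.
      apply: pat_eq => //; first exact: K1p.
      + by rewrite /symdiff !inE h1; case: (a \in C1); case: (a \in G1).
      + by rewrite /symdiff !inE h2; case: (b \in C1); case: (b \in G1).
    have g1 : H1 = symdiff C1 G1 by apply: U1.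
    have g2 : H2 = symdiff C2 G2 by apply: U2 => //; rewrite -eH t1.
    by constructor 4; rewrite eY g1 g2.
have dXQ : [disjoint X & Q].
  rewrite -setI_eq0; apply/eqP/setP => z.
  move: (subb z sG1) (subb z sG2) (subb z (K1s kG1)) (subb z (K2s kG2)) (subb z (K1s k1)) (subb z (K2s k2)) (E12 z).
  rewrite eX /Q /symdiff !inE; bsolve.
have eSXQ : S = X :|: Q.
  apply/setP => z.
  move: (subb z sG1) (subb z sG2) (subb z (K1s kG1)) (subb z (K2s kG2)) (subb z (K1s k1)) (subb z (K2s k2)) (E12 z).
  rewrite eS eX /Q /symdiff !inE; bsolve.
have nQ : Q != set0.
  apply/negP => /eqP q0; apply: neX; by rewrite eSXQ q0 setU0.
have sXS : X \subset S by rewrite eSXQ subsetUl.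
have sQS : Q \subset S by rewrite eSXQ subsetUr.
exists X, Q; split => //.
- split => // Y dY nY sY.
  case: (classif Y dY (subset_trans sY sXS)) => eY.
  + by rewrite eY eqxx in nY.
  + by exfalso; apply: neX; apply/eqP; rewrite eqEsubset sXS -eY sY.
  + by [].
  + by rewrite eY in nY sY; move: nY; rewrite (disj_sub0 sY _) ?eqxx // disjoint_sym.
- split => // Y dY nY sY.
  case: (classif Y dY (subset_trans sY sQS)) => eY.
  + by rewrite eY eqxx in nY.
  + have : X \subset Q by apply: subset_trans sXS _; rewrite -eY.
    by move=> h; move: nX; rewrite (disj_sub0 h dXQ) eqxx.
  + by rewrite eY in nY sY; move: nY; rewrite (disj_sub0 sY dXQ) eqxx.
  + by [].
split.
- have [z [zG zT zE]] := out1 kG1 nZ.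
  by apply/set0Pn; exists z; rewrite !inE eX !inE zG zT zE.
- have [z [zG zT zE]] := out2 kG2 (ltac:(by rewrite -eG)).
  by apply/set0Pn; exists z; rewrite !inE eX !inE zG zT zE orbT.
- have nQT : symdiff C1 G1 :&: T != set0.
    apply: contra nZW => /eqP h; apply/eqP/setP => z; move: (memeq z h).
    by rewrite /symdiff !inE; bsolve.
  have [z [zG zT zE]] := out1 kQ1 nQT.
  by apply/set0Pn; exists z; move: zG zT zE; rewrite /Q /symdiff !inE; bsolve.
have nQT : symdiff C2 G2 :&: T != set0.
  rewrite -eQ; apply: contra nZW => /eqP h; apply/eqP/setP => z; move: (memeq z h).
  by rewrite /symdiff !inE; bsolve.
have [z [zG zT zE]] := out2 kQ2 nQT.
by apply/set0Pn; exists z; move: zG zT zE; rewrite /Q /symdiff !inE; bsolve.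
Qed.
End Comb.

End PC2.
Import PC2.

Module PF.
Set Implicit Arguments. Unset Strict Implicit. Unset Printing Implicit Defensive.

Lemma card3 (U : finType) (T : {set U}) : #|T| = 3 ->
  exists a b c, [/\ T = [set a; b; c], a != b, a != c & b != c].
Proof.
move=> h; have : 0 < #|T| by rewrite h.
case/card_gt0P => c cT.
have : #|T :\ c| == 2 by move: h; rewrite (cardsD1 c) cT add1n => -[->].
case/cards2P => a [b [ab e]].
have aT : a \in T :\ c by rewrite e !inE eqxx.
have bT : b \in T :\ c by rewrite e !inE eqxx orbT.
exists a, b, c; split => //.
- apply/setP => z; rewrite -(setD1K cT) !inE.
  have := memeq z e; rewrite !inE => ->.
  by case: (z == c); case: (z == a); case: (z == b).
- by move: aT; rewrite !inE => /andP[].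
- by move: bT; rewrite !inE => /andP[].
Qed.

Lemma cocirc_char (U : finType) (N : matroid U) (K : {set U} -> Prop) :
  (forall X : {set U}, X \subset ground N -> (coindep N X <-> ~ exists D, [/\ K D, D != set0 & D \subset X])) ->
  (forall D, K D -> D \subset ground N) ->
  forall C, cocircuit N C <-> minK K C.
Proof.
move=> hc hK C; split.
  case/and3P => sC nC /forallP pC.
  have : ~ ~ exists D, [/\ K D, D != set0 & D \subset C].
    by move=> h; move/negP: nC; apply; apply/(hc C sC).
  move/NNPP => [D [kD nD sD]].
  have eDC : D = C.
    apply: NNPP => ne.
    have pD : D \proper C by rewrite properEneq sD andbT; apply/eqP.
    have := pC D; rewrite pD /= => cD.
    by move/(hc D (subset_trans sD sC)): cD; apply; exists D.
  subst D; split => // D' kD' nD' sD'.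
  apply: NNPP => ne.
  have pD : D' \proper C by rewrite properEneq sD' andbT; apply/eqP.
  have := pC D'; rewrite pD /= => cD.
  by move/(hc D' (subset_trans sD' sC)): cD; apply; exists D'.
case=> kC nC mC; apply/and3P; split; first exact: hK.
  by apply/negP => /(hc C (hK C kC)); apply; exists C.
apply/forallP => D; apply/implyP => pD.
have sD : D \subset ground N := subset_trans (proper_sub pD) (hK C kC).
apply/(hc D sD) => -[D' [kD' nD' sD']].
have := mC D' kD' nD' (subset_trans sD' (proper_sub pD)) => e.
by move: pD; rewrite -e properE sD' andbF.
Qed.

End PF.
Import PF.

Module PGG.
Set Implicit Arguments. Unset Strict Implicit. Unset Printing Implicit Defensive.
Import GRing.Theory.

Ltac bsolve := repeat (match goal with |- context [?x \in ?S] => let h := fresh in case h: (x \in S) end);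
  rewrite /= ?andbT ?andbF ?orbT ?orbF; intros; try discriminate; try done.

Section Final.
Variables (U : finType) (M1 M2 : matroid U) (T : {set U}).
Variables (n1 n2 : nat) (f1 : U -> 'rV['F_2]_n1) (f2 : U -> 'rV['F_2]_n2).
Hypothesis hf1 : forall X, indep M1 X = (X \subset ground M1) && free [seq f1 x | x <- enum X].
Hypothesis hf2 : forall X, indep M2 X = (X \subset ground M2) && free [seq f2 x | x <- enum X].
Hypothesis hE : ground M1 :&: ground M2 = T.
Hypotheses (ht1 : triangle M1 T) (ht2 : triangle M2 T).
Hypothesis hc1 : forall C, cocircuit M1 C -> ~~ (C \subset T).
Hypothesis hc2 : forall C, cocircuit M2 C -> ~~ (C \subset T).
Variables (a b c : U).
Hypotheses (eT : T = [set a; b; c]) (ab : a != b) (ac : a != c) (bc : b != c).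

Definition K1 (D : {set U}) := exists w, D = Kset M1 f1 w.
Definition K2 (D : {set U}) := exists w, D = Kset M2 f2 w.

Lemma K10 : K1 set0. Proof. by exists 0%R; rewrite Kset0. Qed.
Lemma K20 : K2 set0. Proof. by exists 0%R; rewrite Kset0. Qed.
Lemma K1D X Y : K1 X -> K1 Y -> K1 (symdiff X Y).
Proof. by move=> [w ->] [w' ->]; exists (w + w')%R; rewrite KsetD. Qed.
Lemma K2D X Y : K2 X -> K2 Y -> K2 (symdiff X Y).
Proof. by move=> [w ->] [w' ->]; exists (w + w')%R; rewrite KsetD. Qed.
Lemma K1s X : K1 X -> X \subset ground M1.
Proof. by move=> [w ->]; apply: Kset_sub. Qed.
Lemma K2s X : K2 X -> X \subset ground M2.
Proof. by move=> [w ->]; apply: Kset_sub. Qed.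

Lemma TE1 : T \subset ground M1.
Proof. by case/andP: ht1 => /and3P[]. Qed.
Lemma TE2 : T \subset ground M2.
Proof. by case/andP: ht2 => /and3P[]. Qed.
Lemma aT : a \in T. Proof. by rewrite eT !inE eqxx. Qed.
Lemma bT : b \in T. Proof. by rewrite eT !inE eqxx orbT. Qed.
Lemma cT : c \in T. Proof. by rewrite eT !inE eqxx !orbT. Qed.

Lemma fc1 : f1 c = (f1 a + f1 b)%R. Proof. have h := tri_sum hf1 ht1 eT ab ac bc. exact h. Qed.
Lemma fc2 : f2 c = (f2 a + f2 b)%R. Proof. have h := tri_sum hf2 ht2 eT ab ac bc. exact h. Qed.

Lemma K1p X : K1 X -> (c \in X) = (a \in X) (+) (b \in X).
Proof.
move=> [w ->]; apply: Kset_par fc1; apply: (subsetP TE1); [exact: aT|exact: bT|exact: cT].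
Qed.
Lemma K2p X : K2 X -> (c \in X) = (a \in X) (+) (b \in X).
Proof.
move=> [w ->]; apply: Kset_par fc2; apply: (subsetP TE2); [exact: aT|exact: bT|exact: cT].
Qed.

Lemma char1 C : cocircuit M1 C <-> minK K1 C.
Proof.
apply: cocirc_char; last exact: K1s.
move=> X sX; have [h1 h2] := bin_coindep hf1 sX; split.
  by move=> /h1 h [D [[w eD] nD sD]]; apply: h; exists w; rewrite -eD.
by move=> h; apply: h2 => -[w [nw sw]]; apply: h; exists (Kset M1 f1 w); split => //; exists w.
Qed.
Lemma char2 C : cocircuit M2 C <-> minK K2 C.
Proof.
apply: cocirc_char; last exact: K2s.
move=> X sX; have [h1 h2] := bin_coindep hf2 sX; split.
  by move=> /h1 h [D [[w eD] nD sD]]; apply: h; exists w; rewrite -eD.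
by move=> h; apply: h2 => -[w [nw sw]]; apply: h; exists (Kset M2 f2 w); split => //; exists w.
Qed.

Lemma K1T X : K1 X -> X \subset T -> X = set0.
Proof.
move=> kX sX; apply/eqP; apply: NNPP => /negP nX.
have [C [mC sC]] := L1 kX nX.
by move: (hc1 ((char1 C).2 mC)); rewrite (subset_trans sC sX).
Qed.
Lemma K2T X : K2 X -> X \subset T -> X = set0.
Proof.
move=> kX sX; apply/eqP; apply: NNPP => /negP nX.
have [C [mC sC]] := L1 kX nX.
by move: (hc2 ((char2 C).2 mC)); rewrite (subset_trans sC sX).
Qed.

Lemma E12 z : (z \in ground M1) && (z \in ground M2) ==> (z \in T).
Proof. by rewrite -hE inE implybb. Qed.

Variable P : matroid U.
Hypothesis hg : ground P = ground M1 :|: ground M2.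
Hypothesis hfl : forall F, flat P F <->
    [/\ F \subset ground M1 :|: ground M2,
        flat M1 (F :&: ground M1) & flat M2 (F :&: ground M2)].

Lemma hspan F : flat P F -> ground P :\: T \subset F -> F = ground P.
Proof.
move=> fF sF; have [sFE f1F f2F] := (hfl F).1 fF.
have s1 : ground M1 \subset F.
  apply/subsetP => e eg; apply/negPn/negP => eF.
  have eF1 : e \notin F :&: ground M1 by rewrite inE (negbTE eF).
  have [w [ew sw]] := flat_cocyc hf1 f1F eg eF1.
  have kw : K1 (Kset M1 f1 w) by exists w.
  have sT : Kset M1 f1 w \subset T.
    apply/subsetP => z zK; have := subsetP sw z zK; rewrite !inE => /andP[zF zg].
    apply/negPn/negP => zT; move: zF; rewrite zg andbT.
    by rewrite (subsetP sF) // hg !inE zT zg.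
  by move: ew; rewrite (K1T kw sT) inE.
have s2 : ground M2 \subset F.
  apply/subsetP => e eg; apply/negPn/negP => eF.
  have eF1 : e \notin F :&: ground M2 by rewrite inE (negbTE eF).
  have [w [ew sw]] := flat_cocyc hf2 f2F eg eF1.
  have kw : K2 (Kset M2 f2 w) by exists w.
  have sT : Kset M2 f2 w \subset T.
    apply/subsetP => z zK; have := subsetP sw z zK; rewrite !inE => /andP[zF zg].
    apply/negPn/negP => zT; move: zF; rewrite zg andbT.
    by rewrite (subsetP sF) // hg !inE zT zg orbT.
  by move: ew; rewrite (K2T kw sT) inE.
by apply/eqP; rewrite eqEsubset hg sFE subUset s1 s2.
Qed.

Lemma mkD F X x y z : flat P F -> (ground P :\: T) :\: X \subset F -> T = [set x; y; z] ->
  x \notin F -> y \notin F -> f1 y = (f1 x + f1 z)%R -> f2 y = (f2 x + f2 z)%R ->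
  exists D, [/\ DD T K1 K2 D, D != set0 & D \subset X].
Proof.
move=> fF sF eTx xF yF e1 e2.
have [sFE f1F f2F] := (hfl F).1 fF.
have xT : x \in T by rewrite eTx !inE eqxx.
have yT : y \in T by rewrite eTx !inE eqxx orbT.
have xF1 : x \notin F :&: ground M1 by rewrite inE (negbTE xF).
have yF1 : y \notin F :&: ground M1 by rewrite inE (negbTE yF).
have xF2 : x \notin F :&: ground M2 by rewrite inE (negbTE xF).
have yF2 : y \notin F :&: ground M2 by rewrite inE (negbTE yF).
have [w1 [x1 y1 dz1 sw1]] := flat_cocyc2 hf1 f1F (subsetP TE1 x xT) (subsetP TE1 y yT) xF1 yF1 e1.
have [w2 [x2 y2 dz2 sw2]] := flat_cocyc2 hf2 f2F (subsetP TE2 x xT) (subsetP TE2 y yT) xF2 yF2 e2.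
have z1 : z \notin Kset M1 f1 w1 by rewrite inE dz1 eqxx andbF.
have z2 : z \notin Kset M2 f2 w2 by rewrite inE dz2 eqxx andbF.
have kD1 : K1 (Kset M1 f1 w1) by exists w1.
have kD2 : K2 (Kset M2 f2 w2) by exists w2.
move: (Kset M1 f1 w1) (Kset M2 f2 w2) kD1 kD2 x1 y1 z1 x2 y2 z2 sw1 sw2 => D1 D2 kD1 kD2 x1 y1 z1 x2 y2 z2 sw1 sw2.
have eD : D1 :&: T = D2 :&: T.
  apply/setP => t; rewrite !in_setI eTx !inE.
  case: eqP => [->|_]; first by rewrite x1 x2.
  case: eqP => [->|_]; first by rewrite y1 y2.
  case: eqP => [->|_]; first by rewrite (negbTE z1) (negbTE z2).
  by rewrite !andbF.
exists ((D1 :|: D2) :\: T); split.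
- by exists D1, D2.
- have : ~~ (D1 \subset T).
    apply/negP => /(K1T kD1) e; by move: x1; rewrite e inE.
  by case/subsetPn => t tD tT; apply/set0Pn; exists t; rewrite !inE tD tT.
apply/subsetP => t; move: (subb t sw1) (subb t sw2) (subb t sF); rewrite hg !inE; bsolve.
Qed.

Lemma bridge (X : {set U}) : X \subset ground P :\: T ->
  (coindep (delete P T) X <-> ~ exists D, [/\ DD T K1 K2 D, D != set0 & D \subset X]).
Proof.
move=> sX; have [h1 h2] := del_coindep hspan sX; split.
  move=> /h1 H [D [[D1 [D2 [[w1 e1] [w2 e2] eD eDD]]] nD sD]].
  have k1 : K1 D1 by exists w1.
  have k2 : K2 D2 by exists w2.
  set F := (ground M1 :\: D1) :|: (ground M2 :\: D2).
  have fF : flat P F.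
    apply/(hfl F).2; split.
    - by apply/subsetP => z; rewrite /F !inE; bsolve.
    - have -> : F :&: ground M1 = ground M1 :\: Kset M1 f1 w1.
        rewrite -e1; apply/setP => z; move: (memeq z eD) (subb z (K1s k1)) (subb z (K2s k2)) (E12 z).
        by rewrite /F !inE; bsolve.
      have h := BF2 hf1 w1; exact h.
    - have -> : F :&: ground M2 = ground M2 :\: Kset M2 f2 w2.
        rewrite -e2; apply/setP => z; move: (memeq z eD) (subb z (K1s k1)) (subb z (K2s k2)) (E12 z).
        by rewrite /F !inE; bsolve.
      have h := BF2 hf2 w2; exact h.
  have sF : (ground P :\: T) :\: X \subset F.
    rewrite eDD in sD.
    by apply/subsetP => z; move: (subb z sD); rewrite hg /F !inE; bsolve.
  have eF := H F fF sF.
  case/set0Pn: nD => z zD.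
  have zF : z \in F.
    rewrite eF hg; move: zD (subb z (K1s k1)) (subb z (K2s k2)); rewrite eDD !inE; bsolve.
  by move: zF zD (subb z (K1s k1)) (subb z (K2s k2)) (E12 z); rewrite eDD /F !inE; bsolve.
move=> H; apply: h2 => F fF sF; apply: NNPP => neq; apply: H.
have [sFE f1F f2F] := (hfl F).1 fF.
case: (boolP (T \subset F)) => TF.
  have : ~~ (ground P \subset F).
    apply/negP => h; apply: neq; apply/eqP; by rewrite eqEsubset h hg sFE.
  case/subsetPn => e eg eF; rewrite hg inE in eg.
  case/orP: eg => eg.
    have eF1 : e \notin F :&: ground M1 by rewrite inE (negbTE eF).
    have [w [ew sw]] := flat_cocyc hf1 f1F eg eF1.
    have kw : K1 (Kset M1 f1 w) by exists w.
    move: (Kset M1 f1 w) kw ew sw => D kD eD sD.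
    have DT : forall t, (t \in D) ==> (t \notin T).
      move=> t; move: (subb t sD) (subb t TF); rewrite !inE; bsolve.
    exists D; split.
    - exists D, set0; split => //; first exact: K20.
        by apply/setP => t; move: (DT t); rewrite !inE; bsolve.
      by apply/setP => t; move: (DT t); rewrite !inE; bsolve.
    - by apply/set0Pn; exists e.
    - apply/subsetP => t; move: (DT t) (subb t sD) (subb t sF); rewrite hg !inE; bsolve.
  have eF1 : e \notin F :&: ground M2 by rewrite inE (negbTE eF).
  have [w [ew sw]] := flat_cocyc hf2 f2F eg eF1.
  have kw : K2 (Kset M2 f2 w) by exists w.
  move: (Kset M2 f2 w) kw ew sw => D kD eD sD.
  have DT : forall t, (t \in D) ==> (t \notin T).
    move=> t; move: (subb t sD) (subb t TF); rewrite !inE; bsolve.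
  exists D; split.
  - exists set0, D; split => //; first exact: K10.
      by apply/setP => t; move: (DT t); rewrite !inE; bsolve.
    by apply/setP => t; move: (DT t); rewrite !inE; bsolve.
  - by apply/set0Pn; exists e.
  - apply/subsetP => t; move: (DT t) (subb t sD) (subb t sF); rewrite hg !inE; bsolve.
have fb1 : f1 b = (f1 a + f1 c)%R by rewrite fc1 addrA vv0 add0r.
have fb2 : f2 b = (f2 a + f2 c)%R by rewrite fc2 addrA vv0 add0r.
have fa1 : f1 c = (f1 b + f1 a)%R by rewrite fc1 addrC.
have fa2 : f2 c = (f2 b + f2 a)%R by rewrite fc2 addrC.
have inF1 : forall t, t \in F -> t \in T -> t \in F :&: ground M1.
  by move=> t tF tT; rewrite inE tF (subsetP TE1).
have ag := subsetP TE1 a aT; have bg := subsetP TE1 b bT; have cg := subsetP TE1 c cT.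
have allT : a \in F -> b \in F -> c \in F -> False.
  move=> aF bF cF; move/negP: TF; apply; apply/subsetP => t.
  rewrite eT !inE; case/orP => [/orP[]|] /eqP-> //.
have fc1' := fc1; have fc2' := fc2.
case aF: (a \in F); case bF: (b \in F); case cF: (c \in F).
- by exfalso; apply: allT.
- exfalso; apply: allT => //.
  by have := flat_tri hf1 f1F (inF1 a aF aT) (inF1 b bF bT) cg fc1; rewrite inE => /andP[].
- exfalso; apply: allT => //.
  by have := flat_tri hf1 f1F (inF1 a aF aT) (inF1 c cF cT) bg fb1; rewrite inE => /andP[].
- apply: (mkD fF sF (x := b) (y := c) (z := a)); rewrite ?aF ?bF ?cF //.
  by rewrite eT; apply/setP => t; rewrite !inE; case: (t == a); case: (t == b); case: (t == c).
- exfalso; apply: allT => //.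
  have fa1' : f1 a = (f1 b + f1 c)%R by rewrite fc1 addrCA vv0 addr0.
  by have := flat_tri hf1 f1F (inF1 b bF bT) (inF1 c cF cT) ag fa1'; rewrite inE => /andP[].
- apply: (mkD fF sF (x := a) (y := c) (z := b)); rewrite ?aF ?bF ?cF //.
  by rewrite eT; apply/setP => t; rewrite !inE; case: (t == a); case: (t == b); case: (t == c).
- apply: (mkD fF sF (x := a) (y := b) (z := c)); rewrite ?aF ?bF ?cF //.
apply: (mkD fF sF (x := a) (y := c) (z := b)); rewrite ?aF ?bF ?cF //.
by rewrite eT; apply/setP => t; rewrite !inE; case: (t == a); case: (t == b); case: (t == c).
Qed.

Lemma charM C : cocircuit (three_sum P T) C <-> minK (DD T K1 K2) C.
Proof.
apply: cocirc_char.
  move=> X sX; exact: bridge.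
move=> D [D1 [D2 [k1 k2 _ ->]]]; rewrite /= hg; apply: setSD; apply: setUSS.
  exact: K1s.
exact: K2s.
Qed.

Lemma mainF :
  (forall C, cocircuit (three_sum P T) C ->
     (cocircuit M1 C /\ [disjoint C & T]) \/
     (cocircuit M2 C /\ [disjoint C & T]) \/
     (exists C1 C2, [/\ cocircuit M1 C1, cocircuit M2 C2,
                       C1 :&: T = C2 :&: T, #|C1 :&: T| = 2 &
                       C = symdiff C1 C2])) /\
  (forall C, (cocircuit M1 C \/ cocircuit M2 C) -> [disjoint C & T] ->
     cocircuit (three_sum P T) C) /\
  (forall C1 C2, cocircuit M1 C1 -> cocircuit M2 C2 ->
     C1 :&: T = C2 :&: T -> #|C1 :&: T| = 2 ->
     cocircuit (three_sum P T) (symdiff C1 C2) \/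
     (exists R Q, [/\ cocircuit (three_sum P T) R, cocircuit (three_sum P T) Q, [disjoint R & Q],
                     symdiff C1 C2 = R :|: Q &
                     [/\ R :&: ground M1 != set0, R :&: ground M2 != set0,
                         Q :&: ground M1 != set0 & Q :&: ground M2 != set0]])).
Proof.
split; [|split].
- move=> C /charM mC.
  have := CI hE eT ab ac bc K10 K1D K1s K1p K1T K20 K2D K2s K2p mC.
  case=> [[m d]|[[m d]|[C1 [C2 [m1 m2 e c2 eC]]]]].
  + by left; split => //; apply/char1.
  + by right; left; split => //; apply/char2.
  + by right; right; exists C1, C2; split => //; [apply/char1 | apply/char2].
- move=> C [h|h] d; apply/charM.
  + exact: (CIIa hE K1s K20 K2s K2T ((char1 C).1 h) d).
  + have hE' : ground M2 :&: ground M1 = T by rewrite setIC.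
    have m := CIIa hE' K2s K10 K1s K1T ((char2 C).1 h) d.
    by apply: minK_ext m => X; apply: DD_sym.
move=> C1 C2 h1 h2 e c2.
have := CIIb hE eT K10 K1D K1s K1p K1T K20 K2D K2s K2T ((char1 _).1 h1) ((char2 _).1 h2) e c2.
case=> [m|[R [Q [mR mQ d eq ne]]]]; first by left; apply/charM.
by right; exists R, Q; split => //; apply/charM.
Qed.
End Final.

End PGG.
Import PGG.

Unset Implicit Arguments.
Theorem corollary3p6 (U : finType) (M1 M2 : matroid U) (T : {set U}) :
  binary M1 -> binary M2 ->
  ground M1 :&: ground M2 = T ->
  triangle M1 T -> triangle M2 T ->
  (forall C, cocircuit M1 C -> ~~ (C \subset T)) ->
  (forall C, cocircuit M2 C -> ~~ (C \subset T)) ->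
  forall P : matroid U, is_gen_par_conn M1 M2 T P ->
  let M := three_sum P T in
  (* (i) *)
  (forall C, cocircuit M C ->
     (cocircuit M1 C /\ [disjoint C & T]) \/
     (cocircuit M2 C /\ [disjoint C & T]) \/
     (exists C1 C2, [/\ cocircuit M1 C1, cocircuit M2 C2,
                       C1 :&: T = C2 :&: T, #|C1 :&: T| = 2 &
                       C = symdiff C1 C2])) /\
  (* (ii) *)
  (forall C, (cocircuit M1 C \/ cocircuit M2 C) -> [disjoint C & T] ->
     cocircuit M C) /\
  (forall C1 C2, cocircuit M1 C1 -> cocircuit M2 C2 ->
     C1 :&: T = C2 :&: T -> #|C1 :&: T| = 2 ->
     cocircuit M (symdiff C1 C2) \/
     (exists R Q, [/\ cocircuit M R, cocircuit M Q, [disjoint R & Q],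
                     symdiff C1 C2 = R :|: Q &
                     [/\ R :&: ground M1 != set0, R :&: ground M2 != set0,
                         Q :&: ground M1 != set0 & Q :&: ground M2 != set0]])).

Proof.
move=> [n1 [f1 hf1]] [n2 [f2 hf2]] hE ht1 ht2 hc1 hc2 P [hg hfl] M.
have [a [b [c [eT ab ac bc]]]] := card3 (eqP (proj2 (andP ht1))).
exact: (mainF hf1 hf2 hE ht1 ht2 hc1 hc2 eT ab ac bc hg hfl).
Qed.
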